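(* Let $\mathcal G$ be a family of connected graphs and $k$ a constant. The following are equivalent: (1) there is a polynomial $p_k$ such that for every $G=(V,E)\in\mathcal G$, a uniformly random spanning tree of $G$ is $k$-splittable with probability at least $1/p_k(|V|)$; (2) there is a polynomial $q_k$ such that for every $G=(V,E)\in\mathcal G$, a random connected $k$-partition of $G$ drawn with probability proportional to its spanning tree weight is balanced with probability at least $1/q_k(|V|)$.
   Context: A tree $T$ is $k$-splittable if there exist $k-1$ edges of $T$ whose removal leaves a forest whose $k$ connected components all have the same number of vertices. A connected $k$-partition of $G=(V,E)$ is a partition of $V$ into $k$ nonempty sets (pieces) each inducing a connected subgraph; it is balanced if all pieces have equal size. For a graph $H$, $\tau(H)$ is its number of spanning trees, and the spanning tree weight of a connected partition $P$ is $\prod_{S\in P}\tau(G[S])$. *)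

(* Defs.v *)
From HB Require Import structures.
From mathcomp Require Import all_boot all_order all_algebra.
Set Implicit Arguments. Unset Strict Implicit. Unset Printing Implicit Defensive.
Import Order.TTheory GRing.Theory Num.Theory.

(* Graphs: vertex set a finType T, adjacency a relation g : rel T.
   A simple graph is a symmetric irreflexive relation.  Edges are represented
   as 2-element vertex sets {x, y}. *)

Section Graphs.
Variable T : finType.
Variable g : rel T.

Definition simple_graph : Prop := symmetric g /\ irreflexive g.

Definition gedges : {set {set T}} := [set [set p.1; p.2] | p in [set p : T * T | g p.1 p.2]].

Definition conn_in (F : {set {set T}}) (A : {set T}) (x y : T) : bool :=
  connect [rel u v | [&& u \in A, v \in A & [set u; v] \in F]] x y.

Definition induces_connected (A : {set T}) : Prop :=
  A != set0 /\ forall x y, x \in A -> y \in A -> conn_in gedges A x y.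

Definition connected_graph : Prop := induces_connected [set: T].

Definition spanning_tree_on (A : {set T}) (F : {set {set T}}) : bool :=
  [&& F \subset gedges,
      [forall S in F, S \subset A],
      #|F| == #|A| - 1 &
      [forall x in A, forall y in A, conn_in F A x y]].

Definition tau (A : {set T}) : nat :=
  #|[set F : {set {set T}} | spanning_tree_on A F]|.

Definition spanning_tree (F : {set {set T}}) : bool := spanning_tree_on [set: T] F.

Definition component (F : {set {set T}}) (x : T) : {set T} :=
  [set y | conn_in F [set: T] x y].

Definition k_splittable (k : nat) (F : {set {set T}}) : bool :=
  [exists R : {set {set T}},
     [&& R \subset F, #|R| == k - 1 &
         [forall x, forall y,
            #|component (F :\: R) x| == #|component (F :\: R) y|]]].

Definition connected_kpartition (k : nat) (P : {set {set T}}) : Prop :=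
  partition P [set: T] /\ #|P| = k /\ (forall S, S \in P -> induces_connected S).

Definition balanced (P : {set {set T}}) : bool :=
  [forall S in P, forall S' in P, #|S| == #|S'|].

Definition st_weight (P : {set {set T}}) : nat := \prod_(S in P) tau S.

Definition is_conn_kpart (k : nat) : pred {set {set T}} :=
  fun P => [&& partition P [set: T], #|P| == k &
              [forall S in P, (S != set0) &&
                 [forall x in S, forall y in S, conn_in gedges S x y]]].

Lemma is_conn_kpartP k P : reflect (connected_kpartition k P) (is_conn_kpart k P).
Proof.
apply: (iffP and3P) => [[Hp /eqP Hk /forallP HS]|[Hp [Hk HS]]].
  split=> //; split=> // S SP; have /implyP/(_ SP)/andP[S0 /forallP H] := HS S.
  split=> // x y xS yS; move: (H x) => /implyP/(_ xS)/forallP/(_ y)/implyP; exact.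
split=> //; first by apply/eqP.
apply/forallP=> S; apply/implyP=> SP; have [S0 H] := HS S SP.
apply/andP; split=> //; apply/forallP=> x; apply/implyP=> xS.
by apply/forallP=> y; apply/implyP=> yS; apply: H.
Qed.

Definition prob_splittable (k : nat) : rat :=
  (#|[set F : {set {set T}} | spanning_tree F && k_splittable k F]|%:R
   / #|[set F : {set {set T}} | spanning_tree F]|%:R)%R.

Definition prob_balanced (k : nat) : rat :=
  ((\sum_(P : {set {set T}} | is_conn_kpart k P && balanced P) st_weight P)%:R
   / (\sum_(P : {set {set T}} | is_conn_kpart k P) st_weight P)%:R)%R.

End Graphs.

(* Main.v *)
Require Import Defs.
From mathcomp Require Import all_boot all_order all_algebra zify ring.
Set Implicit Arguments. Unset Strict Implicit. Unset Printing Implicit Defensive.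


Section Conn.
Variable T : finType.
Implicit Types (F : {set {set T}}) (e : rel T).

Lemma connect_ind' e (Q : T -> T -> Prop) :
  (forall x, Q x x) -> (forall x y z, e x y -> Q y z -> Q x z) ->
  forall x y, connect e x y -> Q x y.
Proof.
move=> Q0 QS x y /connectP [p pth ->] {y}.
elim: p x pth => [|z p IH] x /=; first by move=> _; apply: Q0.
by case/andP=> exz pth; apply: (QS _ z) => //; apply: IH.
Qed.

Lemma connect_restrict e e' (P : pred T) x y :
  connect e x y -> P x -> (forall u v, P u -> e u v -> P v /\ e' u v) ->
  connect e' x y.
Proof.
move=> cxy Px H.
apply: (@connect_ind' e (fun x y => P x -> connect e' x y) _ _ x y cxy Px).
- by move=> z _; apply: connect0.
- move=> a b c eab IH Pa; have [Pb e'ab] := H a b Pa eab.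
  by apply: connect_trans (connect1 e'ab) (IH Pb).
Qed.

Lemma connect_equiv e (Q : rel T) : reflexive Q -> transitive Q ->
  subrel e Q -> subrel (connect e) Q.
Proof.
move=> Qr Qt sub x y cxy.
apply: (@connect_ind' e (fun x y => Q x y)) cxy => // a b c eab Qbc.
by apply: Qt (sub _ _ eab) Qbc.
Qed.

Definition erel F : rel T := [rel u v | [set u; v] \in F].
Definition cc F := connect (erel F).

Lemma erel_sym F : symmetric (erel F).
Proof. by move=> u v; rewrite /erel /= setUC. Qed.

Lemma cc_sym F : connect_sym (erel F).
Proof. exact/sym_connect_sym/erel_sym. Qed.

Lemma cc_refl F x : cc F x x.
Proof. exact: connect0. Qed.

Lemma cc_trans F : transitive (cc F).
Proof. exact: connect_trans. Qed.

Lemma cc_symE F x y : cc F x y = cc F y x.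
Proof. exact: cc_sym. Qed.

Lemma cc_symI F x y : cc F x y -> cc F y x.
Proof. by rewrite cc_symE. Qed.

Lemma conn_inT F x y : conn_in F [set: T] x y = cc F x y.
Proof. by apply: eq_connect => u v; rewrite /= !in_setT. Qed.

Lemma cc_mono F F' : F \subset F' -> subrel (cc F) (cc F').
Proof.
move=> sub; apply: connect_sub => u v e; apply: connect1.
exact: (subsetP sub).
Qed.

Lemma set2_eq (u v a b : T) : [set u; v] = [set a; b] ->
  (u = a /\ v = b) \/ (u = b /\ v = a).
Proof.
move=> E.
have ua : u \in [set a; b] by rewrite -E !inE eqxx.
have va : v \in [set a; b] by rewrite -E !inE eqxx orbT.
have au : a \in [set u; v] by rewrite E !inE eqxx.
have bu : b \in [set u; v] by rewrite E !inE eqxx orbT.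
move: ua va au bu; rewrite !inE.
case/orP=> /eqP ->; case/orP=> /eqP ->; rewrite ?orbb.
- by move=> _ /eqP ->; left.
- by left.
- by right.
- by move=> /eqP -> _; left.
Qed.

Lemma cc_add F a b x y :
  cc ([set a; b] |: F) x y =
  [|| cc F x y, cc F x a && cc F b y | cc F x b && cc F a y].
Proof.
apply/idP/idP.
- move=> H; apply: (@connect_ind' _ (fun x y => [|| cc F x y, cc F x a && cc F b y | cc F x b && cc F a y]) _ _ x y H).
  + by move=> z; rewrite cc_refl.
  + move=> u v w; rewrite /erel /= !inE => /orP [/eqP/set2_eq [[-> ->]|[-> ->]]| euv].
    * case/or3P=> [cbw|/andP[cba cbw]|/andP[cbb caw]].
      - by rewrite cc_refl cbw orbT.
      - by rewrite (cc_trans (cc_symI cba) cbw).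
      - by rewrite caw.
    * case/or3P=> [caw|/andP[caa cbw]|/andP[cab caw]].
      - by rewrite cc_refl caw !orbT.
      - by rewrite cbw.
      - by rewrite (cc_trans (cc_symI cab) caw).
    * have cuv : cc F u v by apply: connect1.
      case/or3P=> [cvw|/andP[cva cbw]|/andP[cvb caw]].
      - by rewrite (cc_trans cuv cvw).
      - by rewrite (cc_trans cuv cva) cbw orbT.
      - by rewrite (cc_trans cuv cvb) caw !orbT.
- have sub := cc_mono (subsetUr [set [set a; b]] F).
  have eab : cc ([set a; b] |: F) a b by apply: connect1; rewrite /erel /= !inE eqxx.
  case/or3P=> [H1|/andP[xa yb]|/andP[xb ay]].
  + exact: sub.
  + exact: cc_trans (cc_trans (sub _ _ xa) eab) (sub _ _ yb).
  + exact: cc_trans (cc_trans (sub _ _ xb) (cc_symI eab)) (sub _ _ ay).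
Qed.

End Conn.


Section Comps.
Variable T : finType.
Implicit Types (F : {set {set T}}).

Definition vcomp F x := [set y in [set: T] | cc F x y].
Definition comps F := equivalence_partition (cc F) [set: T].
Definition ncomp F := #|comps F|.

Lemma cc_same F x y : cc F x y -> cc F x =1 cc F y.
Proof. exact: (same_connect (@cc_sym _ F)). Qed.

Lemma in_vcomp F x y : (y \in vcomp F x) = cc F x y.
Proof. by rewrite !inE. Qed.

Lemma cc_equiv F : {in [set: T] & &, equivalence_rel (cc F)}.
Proof.
move=> x y z _ _ _; split; first exact: cc_refl.
by move=> cxy; apply: (same_connect (@cc_sym _ F)).
Qed.

Lemma comps_partition F : partition (comps F) [set: T].
Proof. exact: equivalence_partitionP (@cc_equiv F). Qed.

Lemma compsP F S : reflect (exists x, S = vcomp F x) (S \in comps F).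
Proof.
apply: (iffP imsetP) => [[x _ ->]|[x ->]]; first by exists x.
by exists x.
Qed.

Lemma vcomp_in F x : vcomp F x \in comps F.
Proof. by apply/compsP; exists x. Qed.

Lemma vcompE F x y : (vcomp F x == vcomp F y) = cc F x y.
Proof.
apply/eqP/idP => [E|cxy].
  by rewrite -in_vcomp E in_vcomp cc_refl.
apply/setP=> z; rewrite !in_vcomp.
by apply: (same_connect (@cc_sym _ F)).
Qed.

Lemma comps_eq F F' : (forall x y, cc F x y = cc F' x y) -> comps F = comps F'.
Proof.
move=> H; rewrite /comps /equivalence_partition; apply: eq_imset => x.
by apply/setP=> y; rewrite !inE H.
Qed.

Lemma ncomp_add_same F a b : cc F a b -> ncomp ([set a; b] |: F) = ncomp F.
Proof.
move=> cab; rewrite /ncomp (@comps_eq _ F) // => x y; rewrite cc_add.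
apply/idP/idP => [/or3P [//|/andP[xa yb]|/andP[xb ay]]|->//].
  exact: cc_trans (cc_trans xa cab) yb.
exact: cc_trans (cc_trans xb (cc_symI cab)) ay.
Qed.

Lemma vcomp_add F a b x : ~~ cc F a b ->
  vcomp ([set a; b] |: F) x =
  if cc F x a || cc F x b then vcomp F a :|: vcomp F b else vcomp F x.
Proof.
move=> nab; apply/setP=> y; rewrite in_vcomp cc_add.
case xa: (cc F x a) => /=.
  have xb : cc F x b = false.
    by apply/negbTE; apply: contra nab => xb; apply: cc_trans (cc_symI xa) xb.
  by rewrite xb !inE /= (cc_same xa) orbF.
case xb: (cc F x b) => /=.
  by rewrite !inE /= (cc_same xb) orbC.
by rewrite !inE /= orbF.
Qed.

Lemma ncomp_add_diff F a b : ~~ cc F a b ->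
  ncomp F = (ncomp ([set a; b] |: F)).+1.
Proof.
move=> nab.
set A := vcomp F a; set B := vcomp F b.
set X := comps F :\: [set A; B].
have AB : A != B by rewrite vcompE.
have XP : forall S, S \in X -> exists2 x, S = vcomp F x & ~~ cc F x a && ~~ cc F x b.
  move=> S; rewrite !inE => /andP [/norP [SA SB] /compsP [x Sx]].
  exists x => //; rewrite Sx in SA SB.
  by rewrite -!vcompE; apply/andP; split; [exact: SA|exact: SB].
have E1 : comps F = A |: (B |: X).
  apply/setP=> S; rewrite !inE.
  case: (S =P A) => [->|_]; first by rewrite vcomp_in.
  by case: (S =P B) => [->|_] //=; rewrite vcomp_in.
have E2 : comps ([set a; b] |: F) = (A :|: B) |: X.
  apply/setP=> S; apply/compsP/idP.
    move=> [x ->]; rewrite vcomp_add //.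
    case: ifP => [_|/norP [xa xb]]; first by rewrite !inE eqxx.
    rewrite -!vcompE in xa xb; rewrite !inE vcomp_in andbT.
    by apply/orP; right; rewrite negb_or; apply/andP; split; [exact: xa|exact: xb].
  rewrite in_setU1 => /orP [/eqP ->|/XP [x -> /andP [xa xb]]].
    by exists a; rewrite vcomp_add // cc_refl.
  by exists x; rewrite vcomp_add // (negbTE xa) (negbTE xb).
have nAB : A :|: B \notin X.
  apply/negP => /XP [x E /andP [xa _]].
  have : a \in vcomp F x by rewrite -E inE in_vcomp cc_refl.
  by rewrite in_vcomp (negbTE xa).
rewrite /ncomp E1 E2 !cardsU1 nAB.
have -> : A \notin B |: X.
  by rewrite !inE negb_or AB /= negb_and negbK eqxx.
have -> : B \notin X by rewrite !inE negb_and negbK eqxx orbT.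
by [].
Qed.

Lemma ncomp_add1 F e : ncomp F <= (ncomp (e |: F)).+1 /\ ncomp (e |: F) <= ncomp F.
Proof.
case: (boolP [exists a, exists b, e == [set a; b]]) => [/existsP [a /existsP [b /eqP ->]]|ne].
  case: (boolP (cc F a b)) => cab.
    by rewrite ncomp_add_same // leqnSn.
  by rewrite (ncomp_add_diff cab) leqnn leqnSn.
rewrite /ncomp (@comps_eq (e |: F) F) ?leqnSn ?leqnn //.
move=> x y; apply: eq_connect => u v; rewrite /erel /= !inE.
case: eqP => // E; case/negP: ne; apply/existsP; exists u; apply/existsP; exists v.
by rewrite E.
Qed.

Lemma ncomp0 : ncomp set0 = #|T|.
Proof.
have cc0 : forall x y : T, cc (set0 : {set {set T}}) x y = (x == y).
  move=> x y; apply/idP/eqP => [|->]; last exact: cc_refl.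
  move=> H; apply/eqP; move: H; apply: (connect_equiv (Q := eq_op)) => //.
    exact: eq_op_trans.
  by move=> u v; rewrite /erel /= inE.
rewrite /ncomp.
have -> : comps (set0 : {set {set T}}) = [set [set x] | x in [set: T]].
  rewrite /comps /equivalence_partition; apply: eq_imset => x.
  by apply/setP => y; rewrite !inE cc0 eq_sym.
by rewrite card_imset ?cardsT //; apply: set1_inj.
Qed.

Lemma ncomp_lb F : #|T| <= ncomp F + #|F|.
Proof.
elim: {F} #|F| {-2}F (erefl #|F|) => [|m IH] F Fm.
  by move/eqP: Fm; rewrite cards_eq0 => /eqP ->; rewrite ncomp0 cards0 addn0.
have [e eF] : exists e, e \in F.
  by apply/set0Pn; rewrite -card_gt0 Fm.
have F0m : #|F :\ e| = m by move: Fm; rewrite (cardsD1 e) eF add1n => -[].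
have H := IH _ F0m.
have [H1 _] := ncomp_add1 (F :\ e) e.
rewrite setD1K // in H1.
rewrite Fm -F0m; apply: leq_trans H _.
by rewrite addnS -addSn leq_add2r.
Qed.

Definition forest F := ncomp F + #|F| == #|T|.

Lemma forestD1 F e : forest F -> forest (F :\ e).
Proof.
rewrite /forest => /eqP fF.
case eF: (e \in F); last first.
  have -> : F :\ e = F by apply/setP => x; rewrite !inE; case: eqP => // ->; rewrite eF.
  by rewrite fF.
rewrite eqn_leq ncomp_lb andbT.
have [H1 _] := ncomp_add1 (F :\ e) e.
rewrite setD1K // in H1.
move: fF; rewrite (cardsD1 e F) eF add1n addnS => <-.
by rewrite -addSn leq_add2r.
Qed.

Lemma forest_sub F F' : forest F -> F' \subset F -> forest F'.
Proof.
elim: {F} #|F :\: F'| {-2}F (erefl #|F :\: F'|) => [|m IH] F Fm fF sub.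
  move/eqP: Fm; rewrite cards_eq0 setD_eq0 => sub'.
  by rewrite (_ : F' = F) //; apply/eqP; rewrite eqEsubset sub sub'.
have [e] : exists e, e \in F :\: F' by apply/set0Pn; rewrite -card_gt0 Fm.
rewrite inE => /andP [eF' eF].
apply: (IH (F :\ e)); last 2 first.
- exact: forestD1.
- apply/subsetP => x xF'; rewrite !inE (subsetP sub) // andbT.
  by apply: contraNneq eF' => <-.
move: Fm; rewrite (cardsD1 e) in_setD eF eF' /= add1n => -[<-].
by apply: eq_card => x; rewrite !inE; case: (x \in F'); case: (x == e).
Qed.

Lemma ncomp1P F : 0 < #|T| -> reflect (forall x y, cc F x y) (ncomp F == 1).
Proof.
move=> n0; apply: (iffP idP) => [/cards1P [S E] x y|H].
  have : vcomp F x == vcomp F y.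
    by have := vcomp_in F x; have := vcomp_in F y; rewrite E !inE => /eqP-> /eqP->.
  by rewrite vcompE.
have [x0 _] : exists x0 : T, true by move: n0; rewrite -cardsT card_gt0 => /set0Pn [x0 _]; exists x0.
apply/cards1P; exists (vcomp F x0); apply/setP => S; rewrite inE.
apply/compsP/eqP => [[x ->]|->]; last by exists x0.
by apply/eqP; rewrite vcompE.
Qed.

End Comps.


Lemma card_le_rel (X Y : finType) (A : {set X}) (B : {set Y}) (rho : X -> Y -> bool) :
  (forall x, x \in A -> exists2 y, y \in B & rho x y) ->
  (forall x x' y, x \in A -> x' \in A -> rho x y -> rho x' y -> x = x') ->
  #|A| <= #|B|.
Proof.
move=> ex inj.
case: (set_0Vmem A) => [->|[x0 x0A]]; first by rewrite cards0.
have [y0 _ _] := ex x0 x0A.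
pose f x := odflt y0 [pick y in B | rho x y].
have fP : forall x, x \in A -> f x \in B /\ rho x (f x).
  move=> x xA; rewrite /f; case: pickP => [y /andP [yB r]|none] //=.
  have [y yB r] := ex x xA.
  by move: (none y); rewrite yB r.
rewrite -(@card_in_imset _ _ f A); last first.
  move=> x x' xA x'A E; apply: (inj x x' (f x)) => //; first by case: (fP x xA).
  by rewrite E; case: (fP x' x'A).
apply: subset_leq_card; apply/subsetP => y /imsetP [x xA ->].
by case: (fP x xA).
Qed.

Lemma card_pairs (X Y : finType) (a : pred X) (b : X -> pred Y) :
  #|[set x : X * Y | a x.1 && b x.1 x.2]| = \sum_(i | a i) #|[set y | b i y]|.
Proof.
rewrite -sum1_card.
transitivity (\sum_(i | a i) \sum_(j | b i j) 1).
  rewrite pair_big_dep; apply: eq_bigl => p; by rewrite inE.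
by apply: eq_bigr => i _; rewrite -sum1_card; apply: eq_bigl => y; rewrite inE.
Qed.

Lemma card_sum1 (X : finType) (S : {set X}) : #|S| = \sum_(e in S) 1.
Proof. by rewrite sum1_card. Qed.

Lemma card_sum_unique (I X : finType) (P : {set I}) (A : I -> {set X}) (B : {set X}) :
  (forall i, i \in P -> A i \subset B) ->
  (forall e, e \in B -> exists2 i, i \in P & e \in A i) ->
  (forall i j e, i \in P -> j \in P -> e \in A i -> e \in A j -> i = j) ->
  #|B| = \sum_(i in P) #|A i|.
Proof.
move=> sub ex uniq.
transitivity (\sum_(i in P) \sum_(e in B) (e \in A i : nat)).
  rewrite exchange_big /= -sum1_card; apply: eq_bigr => e eB.
  have [i iP eAi] := ex e eB.
  rewrite (bigD1 i) //= eAi (@big1 _ _ _ _ _ _ _) ?addn0 // => j /andP [jP ji].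
  case eAj: (e \in A j) => //; case/eqP: ji; exact: (uniq j i e jP iP eAj eAi).
apply: eq_bigr => i iP; rewrite card_sum1 big_mkcond /= [RHS]big_mkcond /=.
apply: eq_bigr => e _; case eA: (e \in A i); last by case: (e \in B).
by rewrite (subsetP (sub i iP) e eA).
Qed.

Lemma exp_mono a b e : a <= b -> a ^ e <= b ^ e.
Proof. by case: e => [|e] ab //; rewrite leq_exp2r. Qed.

Lemma bin_le_exp n m : 'C(n, m) <= n ^ m.
Proof.
have ff : forall n, n ^_ m <= n ^ m.
  elim: m => [|m IH] n'; first by rewrite ffactn0 expn0.
  rewrite ffactnS expnS leq_mul2l; apply/orP; right.
  apply: leq_trans (IH _) _; apply: exp_mono; exact: leq_pred.
apply: leq_trans (ff n); rewrite -bin_ffact; apply: leq_pmulr; exact: fact_gt0.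
Qed.


Section Graph.
Variable T : finType.
Variable g : rel T.
Hypothesis sg : simple_graph g.
Hypothesis cg : connected_graph g.
Implicit Types (F : {set {set T}}) (S : {set T}).

Local Notation n := #|T|.
Local Notation E := (gedges g).

Lemma n_gt0 : 0 < n.
Proof. by case: cg => /set0Pn [x _] _; apply/card_gt0P; exists x. Qed.

Lemma gedgeP e : e \in E -> exists2 p : T * T, g p.1 p.2 & e = [set p.1; p.2].
Proof. by case/imsetP => p; rewrite inE => gp ->; exists p. Qed.

Lemma gedge_mem e : e \in E -> exists u, u \in e.
Proof. by case/gedgeP => p _ ->; exists p.1; rewrite !inE eqxx. Qed.

Lemma sub2 S u v : ([set u; v] \subset S) = (u \in S) && (v \in S).
Proof.
apply/subsetP/andP => [H|[uS vS] w]; first by split; apply: H; rewrite !inE eqxx ?orbT.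
by rewrite !inE => /orP [/eqP->|/eqP->].
Qed.

Lemma conn_in_mono F F' (A A' : {set T}) x y : F \subset F' -> A \subset A' ->
  conn_in F A x y -> conn_in F' A' x y.
Proof.
move=> sF sA; apply: connect_sub => u v /= /and3P [uA vA uvF]; apply: connect1.
by rewrite /= (subsetP sA _ uA) (subsetP sA _ vA) (subsetP sF _ uvF).
Qed.

Lemma conn_in_cc F (A : {set T}) x y : conn_in F A x y -> cc F x y.
Proof. by move=> H; rewrite -conn_inT; apply: conn_in_mono H => //; apply: subsetT. Qed.

Definition fdec F : {ffun {set T} -> {set {set T}}} :=
  [ffun S => if S \in comps F then [set e in F | e \subset S] else set0].

Lemma comp_conn F x y z : y \in vcomp F x -> z \in vcomp F x ->
  conn_in [set e in F | e \subset vcomp F x] (vcomp F x) y z.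
Proof.
rewrite !in_vcomp => xy xz.
have yz : cc F y z := cc_trans (cc_symI xy) xz.
apply: (connect_restrict (P := mem (vcomp F x))) yz _ _; first by rewrite /= in_vcomp.
move=> u v; rewrite /= in_vcomp => xu; rewrite /erel /= => uvF.
have xv : cc F x v by apply: cc_trans xu (connect1 _).
by rewrite !in_vcomp xu xv !inE uvF sub2 !in_vcomp xu xv.
Qed.

Lemma isolated F S y : (forall e, e \in F -> e \subset S) -> y \notin S ->
  vcomp F y = [set y].
Proof.
move=> sub yS; apply/setP => z; rewrite in_vcomp inE.
apply/idP/eqP => [|->]; last exact: cc_refl.
move=> H; apply: (@connect_ind' _ _ (fun y z => y \notin S -> z = y)) H yS => //.
move=> a b c; rewrite /erel /= => abF _ aS.
by move: (sub _ abF); rewrite sub2 (negbTE aS).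
Qed.

Lemma edges_lb F S x0 : x0 \in S -> (forall e, e \in F -> e \subset S) ->
  (forall y z, y \in S -> z \in S -> cc F y z) -> #|S| <= (#|F|).+1.
Proof.
move=> x0S sub con.
have : ncomp F <= 1 + #|~: S|.
  apply: leq_trans (_ : #|vcomp F x0 |: [set [set y] | y in ~: S]| <= _).
    apply: subset_leq_card; apply/subsetP => C /compsP [y ->].
    case yS: (y \in S).
      have -> : vcomp F y = vcomp F x0 by apply/eqP; rewrite vcompE cc_symE con.
      by rewrite !inE eqxx.
    rewrite (isolated sub) ?yS // !inE; apply/orP; right.
    by apply/imsetP; exists y; rewrite // inE yS.
  by rewrite cardsU1 leq_add ?leq_b1 ?leq_imset_card.
rewrite cardsCs setCK => H.
have := ncomp_lb F; have := subset_leq_card (subsetT S); rewrite cardsT => hS.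
lia.
Qed.

Lemma sum_eq_le (I : finType) (P : {set I}) (a b : I -> nat) :
  (forall i, i \in P -> a i <= b i) -> \sum_(i in P) a i = \sum_(i in P) b i ->
  forall i, i \in P -> a i = b i.
Proof.
move=> le eqs i iP; apply/eqP; rewrite eqn_leq le //= leqNgt; apply/negP => lt.
have : \sum_(i in P) a i < \sum_(i in P) b i.
  rewrite (bigD1 i) //= [X in _ < X](bigD1 i) //=.
  rewrite -addSn leq_add //; apply: leq_sum => j /andP [jP _]; exact: le.
by rewrite eqs ltnn.
Qed.

Lemma block_uniq (P : {set {set T}}) S S' u :
  partition P [set: T] -> S \in P -> S' \in P -> u \in S -> u \in S' -> S = S'.
Proof.
move=> /and3P [_ tP _] SP S'P uS uS'.
by rewrite -(def_pblock tP SP uS) (def_pblock tP S'P uS').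
Qed.

Lemma forest_dec F : F \subset E -> forest F ->
  forall S, S \in comps F -> spanning_tree_on g S (fdec F S).
Proof.
move=> FE fF.
set P := comps F.
have Ppart : partition P [set: T] := comps_partition F.
set A := fun S => [set e in F | e \subset S].
have fA : forall S, S \in P -> fdec F S = A S by move=> S SP; rewrite ffunE SP.
have lb : forall S, S \in P -> #|S| <= (#|A S|).+1.
  move=> S /compsP [x ->]; apply: (@edges_lb _ _ x).
  - by rewrite in_vcomp cc_refl.
  - by move=> e; rewrite inE => /andP [].
  - by move=> y z yS zS; apply: conn_in_cc (comp_conn yS zS).
have sumA : #|F| = \sum_(S in P) #|A S|.
  apply: card_sum_unique.
  - by move=> S _; apply/subsetP => e; rewrite inE => /andP [].
  - move=> e eF; have [[u v] /= _ euv] := gedgeP (subsetP FE _ eF).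
    exists (vcomp F u); first exact: vcomp_in.
    rewrite inE eF euv sub2 !in_vcomp cc_refl /=; apply: connect1.
    by rewrite /erel /= -euv.
  - move=> S S' e SP S'P; rewrite !inE => /andP [eF eS] /andP [_ eS'].
    have [u ue] := gedge_mem (subsetP FE _ eF).
    exact: (block_uniq Ppart SP S'P (subsetP eS _ ue) (subsetP eS' _ ue)).
have sumS : n = \sum_(S in P) #|S| by rewrite -cardsT; apply: card_partition.
have eq1 : forall S, S \in P -> #|S| = (#|A S|).+1.
  apply: sum_eq_le => //.
  rewrite -sumS; move/eqP: fF; rewrite /ncomp sumA -/P => <-.
  by rewrite [RHS](eq_bigr (fun S => 1 + #|A S|)) // big_split /= -card_sum1.
move=> S SP; rewrite fA //; apply/and4P; split.
- by apply/subsetP => e; rewrite inE => /andP [eF _]; apply: (subsetP FE).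
- by apply/forallP => e; apply/implyP; rewrite inE => /andP [].
- by rewrite eq1 // subn1.
- move: SP => /compsP [x ->].
  apply/forallP => y; apply/implyP => yS; apply/forallP => z; apply/implyP => zS.
  exact: comp_conn.
Qed.


Lemma st_props Tr : spanning_tree g Tr ->
  [/\ Tr \subset E, #|Tr| = n - 1 & ncomp Tr = 1].
Proof.
case/and4P => TE _ /eqP cT /forallP con; split => //; first by rewrite cT cardsT.
apply/eqP/ncomp1P; first exact: n_gt0.
move=> x y; rewrite -conn_inT.
by move: (con x); rewrite in_setT /= => /forallP /(_ y); rewrite in_setT.
Qed.

Lemma st_forest Tr : spanning_tree g Tr -> forest Tr.
Proof.
case/st_props => _ c1 n1; rewrite /forest n1 c1; have := n_gt0; lia.
Qed.

Lemma forest_kpart k F : F \subset E -> forest F -> ncomp F = k ->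
  is_conn_kpart g k (comps F).
Proof.
move=> FE fF nk; apply/and3P; split; first exact: comps_partition.
  by apply/eqP.
apply/forallP => S; apply/implyP => SP.
have := forest_dec FE fF SP; case/and4P => fE _ _ /forallP con.
move: SP => /compsP [x Sx].
apply/andP; split.
  by apply/set0Pn; exists x; rewrite Sx in_vcomp cc_refl.
apply/forallP => y; apply/implyP => yS; apply/forallP => z; apply/implyP => zS.
move: (con y); rewrite yS /= => /forallP /(_ z); rewrite zS /=.
by apply: conn_in_mono.
Qed.

Lemma extend m : forall F, ncomp F = m.+1 ->
  exists R : {set {set T}}, [/\ R \subset E, R :&: F = set0, #|R| = m & ncomp (F :|: R) = 1].
Proof.
elim: m => [|m IH] F nF.
  by exists set0; rewrite sub0set set0I cards0 setU0.
case: (pickP [pred p : T * T | g p.1 p.2 && ~~ cc F p.1 p.2]) => [[a b] /= /andP [gab nab]|none].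
  have := ncomp_add_diff nab; rewrite nF => -[nF'].
  have [R' [R'E R'F cR' n1]] := IH _ (esym nF').
  have eE : [set a; b] \in E by apply/imsetP; exists (a, b); rewrite ?inE.
  have eF : [set a; b] \notin F.
    by apply: contra nab => eF; apply: connect1; rewrite /erel /= eF.
  have eR' : [set a; b] \notin R'.
    apply/negP => eR; have : [set a; b] \in R' :&: ([set a; b] |: F).
      by rewrite inE eR setU11.
    by rewrite R'F inE.
  exists ([set a; b] |: R'); split.
  - by rewrite subUset sub1set eE R'E.
  - apply/setP => e; rewrite !inE; apply/negP => /andP [/orP [/eqP -> |eR] eF'].
      by rewrite eF' in eF.
    have : e \in R' :&: ([set a; b] |: F) by rewrite !inE eR eF' orbT.
    by rewrite R'F inE.
  - by rewrite cardsU1 eR' cR'.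
  - by rewrite -n1 setUA [F :|: _]setUC.
have all : forall x y, cc F x y.
  move=> x y; rewrite -conn_inT.
  have : conn_in E [set: T] x y by case: cg => _ /(_ x y); apply; rewrite inE.
  apply: connect_sub => u v /= /and3P [_ _ uvE]; have [[a b] /= gab euv] := gedgeP uvE.
  suff : cc F u v by rewrite -conn_inT.
  case: (boolP (cc F a b)) => [cab|nab]; last by move: (none (a, b)); rewrite /= gab nab.
  have [[-> ->]|[-> ->]] := set2_eq euv; first by [].
  by rewrite cc_symE.
have /(ncomp1P _ n_gt0) := all; rewrite nF.
by [].
Qed.

Lemma component_vcomp F x : component F x = vcomp F x.
Proof. by apply/setP => y; rewrite in_vcomp inE conn_inT. Qed.

End Graph.


Section Count.
Variable T : finType.
Variable g : rel T.
Hypothesis sg : simple_graph g.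
Hypothesis cg : connected_graph g.
Variable k : nat.
Hypothesis k0 : 0 < k.
Implicit Types (F : {set {set T}}) (S : {set T}).

Local Notation n := #|T|.
Local Notation E := (gedges g).

Definition fam (P : {set {set T}}) : pred {ffun {set T} -> {set {set T}}} :=
  family (fun S => if S \in P then [set F | spanning_tree_on g S F] else [set set0]).

Lemma foldr_prod (X : Type) (s : seq X) (f : X -> nat) :
  foldr muln 1 (map f s) = \prod_(x <- s) f x.
Proof. by elim: s => [|x s IH] /=; rewrite ?big_nil ?big_cons ?IH. Qed.

Lemma card_fam P : #|fam P| = st_weight g P.
Proof.
rewrite /fam card_family /st_weight foldr_prod big_enum [RHS]big_mkcond /=.
apply: eq_bigr => S _; case: (S \in P) => //.
by rewrite cards1.
Qed.


Definition eqcomps (Tr R : {set {set T}}) :=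
  [forall x, forall y, #|component (Tr :\: R) x| == #|component (Tr :\: R) y|].

Lemma beta_props (Tr R : {set {set T}}) : spanning_tree g Tr -> R \subset Tr -> #|R| = k - 1 ->
  [/\ is_conn_kpart g k (comps (Tr :\: R)), fdec (Tr :\: R) \in fam (comps (Tr :\: R)),
      Tr :\: R = \bigcup_(S in comps (Tr :\: R)) fdec (Tr :\: R) S
    & eqcomps Tr R -> balanced (comps (Tr :\: R))].
Proof.
move=> sT RT cR; set F := Tr :\: R.
have [TE cT n1] := st_props cg sT.
have FE : F \subset E by apply: subset_trans TE; apply: subsetDl.
have fF : forest F by apply: forest_sub (st_forest cg sT) _; apply: subsetDl.
have cF : #|F| = #|Tr| - #|R| by rewrite cardsD (setIidPr RT).
have nF : ncomp F = k.
  move/eqP: fF; have := subset_leq_card RT; have := n_gt0 cg; rewrite cF cT cR.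
  lia.
split.
- exact: forest_kpart.
- apply/familyP => S; case SP: (S \in comps F).
    by rewrite inE; apply: forest_dec.
  by rewrite inE ffunE SP.
- apply/setP => e; apply/idP/bigcupP => [eF|[S SP]]; last first.
    by rewrite ffunE SP inE => /andP [].
  have [[u v] /= _ euv] := gedgeP (subsetP FE _ eF).
  exists (vcomp F u); first exact: vcomp_in.
  rewrite ffunE vcomp_in inE eF euv sub2 !in_vcomp cc_refl /=; apply: connect1.
  by rewrite /erel /= -euv.
- move=> /forallP eqc; apply/forallP => S; apply/implyP => /compsP [x ->].
  apply/forallP => S'; apply/implyP => /compsP [y ->].
  by rewrite -!component_vcomp; move/forallP: (eqc x) => /(_ y).
Qed.

Lemma alpha_props P f : is_conn_kpart g k P -> f \in fam P ->
  [/\ \bigcup_(S in P) f S \subset E, forest (\bigcup_(S in P) f S),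
      ncomp (\bigcup_(S in P) f S) = k, comps (\bigcup_(S in P) f S) = P &
     (forall S, f S = if S \in P then [set e in \bigcup_(S in P) f S | e \subset S] else set0)].
Proof.
move=> /and3P [Ppart /eqP cP /forallP Pcon] /familyP ff.
set F0 := \bigcup_(S in P) f S.
have fst : forall S, S \in P -> spanning_tree_on g S (f S).
  by move=> S SP; move: (ff S); rewrite SP inE.
have fS0 : forall S, S \notin P -> f S = set0.
  by move=> S SP; move: (ff S); rewrite (negbTE SP) inE => /eqP.
have fE : forall S, S \in P -> f S \subset E by move=> S /fst /and4P [].
have fSS : forall S e, S \in P -> e \in f S -> e \subset S.
  by move=> S e /fst /and4P [_ /forallP H _ _] ef; move: (H e); rewrite ef.
have F0E : F0 \subset E by apply/bigcupsP => S SP; apply: fE.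
have tP : trivIset P by case/and3P: Ppart.
have coverP : cover P = [set: T] by case/and3P: Ppart => /eqP.
have ccP : forall x y, cc F0 x y = (y \in pblock P x).
  move=> x y; apply/idP/idP.
    apply: (connect_equiv (Q := fun x y => y \in pblock P x)).
    - by move=> z; rewrite mem_pblock coverP inE.
    - move=> b a c ab bc; rewrite -(same_pblock tP ab) //.
    - move=> u v; rewrite /erel /= => /bigcupP [S SP] uvf.
      have := fSS _ _ SP uvf; rewrite sub2 => /andP [uS vS].
      by rewrite (def_pblock tP SP uS).
  move=> yx; have xc : x \in cover P by rewrite coverP inE.
  have SP := pblock_mem xc; have xS : x \in pblock P x by rewrite mem_pblock.
  have := fst _ SP; case/and4P => _ _ _ /forallP /(_ x); rewrite xS /= => /forallP /(_ y).
  rewrite yx /= => H; apply: (cc_mono (F := f (pblock P x))).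
    exact: (bigcup_sup _ SP).
  exact: conn_in_cc H.
have compsE : comps F0 = P.
  rewrite -{1}(equivalence_partition_pblock Ppart) /comps /equivalence_partition.
  by apply: eq_imset => x; apply/setP => y; rewrite !inE ccP.
have nS : forall S, S \in P -> 0 < #|S|.
  move=> S SP; apply/card_gt0P; move/(_ S): Pcon; rewrite SP /= => /andP [/set0Pn [x xS] _].
  by exists x.
have cF0 : #|F0| = \sum_(S in P) (#|S| - 1).
  rewrite (@card_sum_unique _ _ P f F0).
  - by apply: eq_bigr => S SP; case/and4P: (fst S SP) => _ _ /eqP.
  - by move=> S SP; apply: bigcup_sup.
  - by move=> e /bigcupP [S SP ef]; exists S.
  - move=> S S' e SP S'P eS eS'; have [u ue] := gedge_mem (subsetP (fE S SP) _ eS).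
    exact: (block_uniq Ppart SP S'P (subsetP (fSS _ _ SP eS) _ ue) (subsetP (fSS _ _ S'P eS') _ ue)).
have sumS : n = \sum_(S in P) #|S| by rewrite -cardsT; apply: card_partition.
have nk : ncomp F0 = k by rewrite /ncomp compsE.
split => //.
- rewrite /forest nk cF0 sumS -cP card_sum1 -big_split /=; apply/eqP.
  by apply: eq_bigr => S SP; have := nS S SP; lia.
- move=> S; case: ifP => SP; last by rewrite fS0 ?SP.
  apply/setP => e; rewrite inE; apply/idP/andP => [ef|[/bigcupP [S' S'P ef] eS]].
    by split; [apply: (subsetP (bigcup_sup _ SP))|apply: fSS SP ef].
  have [u ue] := gedge_mem (subsetP (fE S' S'P) _ ef).
  by rewrite (block_uniq Ppart SP S'P (subsetP eS _ ue) (subsetP (fSS _ _ S'P ef) _ ue)).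
Qed.


Definition TRs (b : bool) := [set x : {set {set T}} * {set {set T}} |
   [&& spanning_tree g x.1, x.2 \subset x.1, #|x.2| == k - 1 & b ==> eqcomps x.1 x.2]].
Definition Trees (b : bool) := [set Tr | spanning_tree g Tr && (b ==> k_splittable k Tr)].
Definition Pairs (b : bool) := [set x : {set {set T}} * {ffun {set T} -> {set {set T}}} |
   (is_conn_kpart g k x.1 && (b ==> balanced x.1)) && (x.2 \in fam x.1)].
Definition Bd := (n * n) ^ (k - 1).

Lemma sum_const_set (X : finType) (A : {set X}) c : \sum_(i in A) c = #|A| * c.
Proof. by rewrite sum_nat_const. Qed.

Lemma cardE_le : #|E| <= n * n.
Proof.
apply: leq_trans (leq_imset_card _ _) _.
by rewrite -card_prod; apply: max_card.
Qed.

Lemma U1 b : #|TRs b| <= #|Trees b| * Bd.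
Proof.
apply: leq_trans (_ : #|[set x : {set {set T}} * {set {set T}} |
   (x.1 \in Trees b) && ((x.2 \subset x.1) && (#|x.2| == k - 1))]| <= _).
  apply: subset_leq_card; apply/subsetP => -[Tr R]; rewrite !inE /=.
  case/and4P => sT RT cR eq; rewrite sT RT cR /= andbT; case: b eq => //= eq.
  by apply/existsP; exists R; rewrite RT cR.
rewrite (card_pairs (fun Tr => Tr \in Trees b) (fun Tr (R : {set {set T}}) => (R \subset Tr) && (#|R| == k - 1))).
rewrite -sum_const_set; apply: leq_sum => Tr; rewrite inE => /andP [sT _].
rewrite cards_draws; have [_ cT _] := st_props cg sT; rewrite cT.
rewrite /Bd; apply: (leq_trans (bin_le_exp _ _)); apply: exp_mono.
by have := n_gt0 cg; nia.
Qed.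


Lemma setUDK_disj (A R : {set {set T}}) : R :&: A = set0 -> (A :|: R) :\: R = A.
Proof.
move=> RA; apply/setP => e; rewrite !inE; case eR: (e \in R) => /=; last by rewrite orbF.
apply/esym/negP => eF; have : e \in R :&: A by rewrite inE eR eF.
by rewrite RA inE.
Qed.

Lemma U2 b : k <= n -> #|Trees b| <= #|TRs b|.
Proof.
move=> kn.
apply: (@card_le_rel _ _ _ _ (fun Tr x => x.1 == Tr)) => [Tr|Tr Tr' x _ _ /eqP <- /eqP] //.
rewrite inE => /andP [sT spl].
have [_ cT _] := st_props cg sT.
case: b spl => /= [/existsP [R /and3P [RT cR eqc]]|_].
  by exists (Tr, R); rewrite // inE /= sT RT cR.
have : 0 < #|[set R : {set {set T}} | R \subset Tr & #|R| == k - 1]|.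
  by rewrite cards_draws bin_gt0 cT; have := n_gt0 cg; lia.
case/card_gt0P => R; rewrite inE => /andP [RT cR].
by exists (Tr, R); rewrite // inE /= sT RT cR.
Qed.

Lemma U3 b : #|TRs b| <= #|Pairs b| * Bd.
Proof.
set Rs := [set R : {set {set T}} | R \subset E & #|R| == k - 1].
have cRs : #|Rs| <= Bd.
  rewrite cards_draws /Bd; apply: leq_trans (bin_le_exp _ _) _.
  by apply: exp_mono; apply: cardE_le.
apply: leq_trans (_ : #|setX (Pairs b) Rs| <= _); last by rewrite cardsX leq_mul2l cRs orbT.
apply: (@card_le_rel _ _ _ _ (fun x y => (y.1 == (comps (x.1 :\: x.2), fdec (x.1 :\: x.2))) && (y.2 == x.2))).
  move=> [Tr R]; rewrite inE /= => /and4P [sT RT /eqP cR eqc].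
  have [kp ff un bal] := beta_props sT RT cR.
  exists ((comps (Tr :\: R), fdec (Tr :\: R)), R); last by rewrite !eqxx.
  have [TE _ _] := st_props cg sT.
  apply/setXP; split; last by rewrite in_set (subset_trans RT TE) cR eqxx.
  rewrite in_set /= kp ff andbT /=.
  by case: b eqc => //= /bal.
move=> [Tr R] [Tr' R'] [y1 y2]; rewrite !inE /= => /and4P [sT RT /eqP cR _] /and4P [sT' RT' /eqP cR' _].
move=> /andP [/eqP e1 /eqP e2] /andP [/eqP e1' /eqP e2'].
have ER : R' = R by rewrite -e2' e2.
move: RT' cR' e1'; rewrite ER => RT' cR' e1'.
have [_ _ un _] := beta_props sT RT cR; have [_ _ un' _] := beta_props sT' RT' cR'.
have E3 : (comps (Tr :\: R), fdec (Tr :\: R)) = (comps (Tr' :\: R), fdec (Tr' :\: R)).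
  by rewrite -e1 -e1'.
case: E3 => e3 e4.
have DE : Tr :\: R = Tr' :\: R by rewrite un un' e3 e4.
suff -> : Tr = Tr' by [].
apply/setP => e; case eR: (e \in R).
  by rewrite (subsetP RT _ eR) (subsetP RT' _ eR).
by move/setP: DE => /(_ e); rewrite !inE eR.
Qed.

Lemma U4 b : #|Pairs b| <= #|TRs b|.
Proof.
apply: (@card_le_rel _ _ _ _ (fun (x : {set {set T}} * {ffun {set T} -> {set {set T}}}) (y : {set {set T}} * {set {set T}}) => (y.1 == \bigcup_(S in x.1) x.2 S :|: y.2) &&
                                         (y.2 :&: \bigcup_(S in x.1) x.2 S == set0))).
  move=> [P f]; rewrite inE /= => /andP [/andP [kp bal] ff].
  have [F0E fF0 nF0 cF0 fE] := alpha_props kp ff.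
  set F0 := \bigcup_(S in P) f S in F0E fF0 nF0 cF0 fE *.
  have [R [RE RF cR n1]] := @extend _ _ cg (k - 1) F0 (ltac:(rewrite nF0; lia)).
  exists (F0 :|: R, R); last by rewrite /= eqxx RF eqxx.
  have DE : (F0 :|: R) :\: R = F0 by apply: setUDK_disj.
  rewrite in_set /=; apply/and4P; split.
  - apply/and4P; split.
    + by rewrite subUset F0E RE.
    + by apply/forallP => e; apply/implyP => _; apply: subsetT.
    + rewrite cardsU setIC RF cards0 subn0 cR cardsT.
      move/eqP: fF0; rewrite nF0 => H; have := n_gt0 cg.
      have : k <= n by rewrite -H leq_addr.
      lia.
    + apply/forallP => x; apply/implyP => _; apply/forallP => y; apply/implyP => _.
      by rewrite conn_inT; move: n1 => /eqP /(ncomp1P _ (n_gt0 cg)); apply.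
  - exact: subsetUr.
  - by rewrite cR.
  - case: b bal => //= bal; apply/forallP => x; apply/forallP => y.
    rewrite DE !component_vcomp.
    move/forallP: bal => /(_ (vcomp F0 x)); rewrite -{1}cF0 vcomp_in /= => /forallP /(_ (vcomp F0 y)).
    by rewrite -cF0 vcomp_in.
move=> [P f] [P' f'] [Tr R]; rewrite !in_set /=.
move=> /andP [/andP [kp _] ff] /andP [/andP [kp' _] ff'].
move=> /andP [/eqP eT /eqP eR] /andP [/eqP eT' /eqP eR'].
have [_ _ _ cF0 fE] := alpha_props kp ff.
have [_ _ _ cF0' fE'] := alpha_props kp' ff'.
have EF : \bigcup_(S in P) f S = \bigcup_(S in P') f' S.
  by rewrite -(setUDK_disj eR) -(setUDK_disj eR') -eT -eT'.
have EP : P = P' by rewrite -cF0 -cF0' EF.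
have Ef : f = f'.
  by apply/ffunP => S; rewrite fE fE' EF EP.
by rewrite EP Ef.
Qed.

End Count.

Import Order.TTheory GRing.Theory Num.Theory.

Section Final.
Variable T : finType.
Variable g : rel T.
Hypothesis sg : simple_graph g.
Hypothesis cg : connected_graph g.
Variable k : nat.
Hypothesis k0 : 0 < k.
Local Notation n := #|T|.

Lemma kn_pairs b : 0 < #|Pairs g k b| -> k <= n.
Proof.
case/card_gt0P => -[P f]; rewrite in_set /= => /andP [/andP [/and3P [Pp /eqP cP /forallP ne] _] _].
rewrite -cardsT (card_partition Pp) -cP -sum1_card.
apply: leq_sum => S SP; move: (ne S); rewrite SP /= => /andP [/set0Pn [x xS] _].
by apply/card_gt0P; exists x.
Qed.

Lemma kn_trees : 0 < #|Trees g k true| -> k <= n.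
Proof.
case/card_gt0P => Tr; rewrite inE /= => /andP [sT /existsP [R /and3P [RT /eqP cR _]]].
have [_ cT _] := st_props cg sT; have := subset_leq_card RT; have := n_gt0 cg.
rewrite cT cR => h1 h2; move: h1 h2; set m := #|T|; clear; lia.
Qed.

Lemma key1 : 0 < #|Trees g k true| ->
  #|Trees g k true| <= #|Pairs g k true| * Bd T k /\ #|Pairs g k false| <= #|Trees g k false| * Bd T k.
Proof.
move=> H; have kn := kn_trees H; split.
  exact: leq_trans (U2 cg k0 true kn) (U3 cg k0 true).
exact: leq_trans (U4 cg k0 false) (U1 cg k0 false).
Qed.

Lemma key2 : 0 < #|Pairs g k true| ->
  #|Pairs g k true| <= #|Trees g k true| * Bd T k /\ #|Trees g k false| <= #|Pairs g k false| * Bd T k.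
Proof.
move=> H; have kn := kn_pairs H; split.
  exact: leq_trans (U4 cg k0 true) (U1 cg k0 true).
exact: leq_trans (U2 cg k0 false kn) (U3 cg k0 false).
Qed.

Lemma Trees_sub : #|Trees g k true| <= #|Trees g k false|.
Proof. by apply: subset_leq_card; apply/subsetP => Tr; rewrite !inE => /andP [-> _]. Qed.

Lemma Pairs_sub : #|Pairs g k true| <= #|Pairs g k false|.
Proof.
apply: subset_leq_card; apply/subsetP => x; rewrite !in_set /=.
by case/andP => /andP [-> _] ->.
Qed.

Lemma card_Pairs b : #|Pairs g k b| =
  \sum_(P | is_conn_kpart g k P && (b ==> balanced P)) st_weight g P.
Proof.
rewrite (card_pairs (fun P => is_conn_kpart g k P && (b ==> balanced P))
                    (fun P (f : {ffun {set T} -> {set {set T}}}) => f \in fam g P)).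
by apply: eq_bigr => P _; rewrite -card_fam; apply: eq_card => f; rewrite inE.
Qed.

Lemma probS : prob_splittable g k = (#|Trees g k true|%:R / #|Trees g k false|%:R)%R.
Proof.
rewrite /prob_splittable; congr (_%:R / _%:R)%R; apply: eq_card => F; rewrite !inE //.
by rewrite andbT.
Qed.

Lemma probB : prob_balanced g k = (#|Pairs g k true|%:R / #|Pairs g k false|%:R)%R.
Proof.
rewrite /prob_balanced !card_Pairs; congr (_%:R / _%:R)%R.
by apply: eq_bigl => P; rewrite andbT.
Qed.

End Final.

Import Order.TTheory GRing.Theory Num.Theory.
Local Open Scope ring_scope.

Lemma inv_le_ratio (a b c : rat) : 0 < b -> 0 < c -> (c^-1 <= a / b) = (b <= a * c).
Proof. by move=> b0 c0; rewrite ler_pdivlMr // mulrC ler_pdivrMr. Qed.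

Lemma transfer (S t Wb W B : nat) (p : rat) : (S <= t)%N -> (0 < B)%N -> 0 < p ->
  p^-1 <= S%:R / t%:R ->
  ((0 < S)%N -> (S <= Wb * B)%N /\ (W <= t * B)%N) -> (Wb <= W)%N ->
  0 < p * B%:R * B%:R /\ (p * B%:R * B%:R)^-1 <= Wb%:R / W%:R.
Proof.
move=> St B0 p0 hp key WbW.
have B0r : 0 < (B%:R : rat) by rewrite ltr0n.
have q0 : 0 < p * B%:R * B%:R by rewrite !mulr_gt0.
split => //.
have S0 : (0 < S)%N.
  case: S St hp {key} => // _; rewrite mul0r => hp.
  have pi0 : 0 < p^-1 by rewrite invr_gt0.
  by have := lt_le_trans pi0 hp; rewrite ltxx.
have t0 : (0 < t)%N := leq_trans S0 St.
have [h1 h2] := key S0.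
have Wb0 : (0 < Wb)%N by move: h1 S0; clear; case: Wb => //; rewrite mul0n leqn0 => /eqP ->.
have W0 : (0 < W)%N := leq_trans Wb0 WbW.
rewrite inv_le_ratio ?ltr0n // in hp; rewrite inv_le_ratio ?ltr0n //.
have h1r : (S%:R : rat) <= Wb%:R * B%:R by rewrite -natrM ler_nat.
have h2r : (W%:R : rat) <= t%:R * B%:R by rewrite -natrM ler_nat.
have pB : 0 <= p * B%:R by rewrite mulr_ge0 // ltW.
have h3 : (t%:R : rat) * B%:R <= S%:R * p * B%:R := ler_wpM2r (ltW B0r) hp.
have h4 : (S%:R : rat) * (p * B%:R) <= Wb%:R * B%:R * (p * B%:R) := ler_wpM2r pB h1r.
apply: le_trans h2r _; apply: le_trans h3 _.
have -> : (Wb%:R : rat) * (p * B%:R * B%:R) = Wb%:R * B%:R * (p * B%:R) by ring.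
by rewrite -mulrA.
Qed.

Lemma Bd_eval n k : ((n%:R * n%:R) ^+ (k - 1) : rat) = (Bd 'I_n k)%:R.
Proof. by rewrite /Bd card_ord natrX natrM. Qed.

Lemma Bd_gt0 (T : finType) (g : rel T) k : connected_graph g -> (0 < Bd T k)%N.
Proof. by move=> cg; rewrite /Bd expn_gt0 muln_gt0 (n_gt0 cg). Qed.

Theorem mainTheorem7 (Fam : forall n : nat, rel 'I_n -> Prop) (k : nat) :
  (0 < k)%N ->
  (forall n (g : rel 'I_n), Fam n g -> simple_graph g /\ connected_graph g) ->
  (exists p : {poly rat}, forall n (g : rel 'I_n), Fam n g ->
      0 < p.[n%:R] /\ (p.[n%:R])^-1 <= prob_splittable g k)
  <->
  (exists q : {poly rat}, forall n (g : rel 'I_n), Fam n g ->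
      0 < q.[n%:R] /\ (q.[n%:R])^-1 <= prob_balanced g k).
Proof.
move=> k0 Hfam; split => -[p Hp];
  exists (p * ('X * 'X) ^+ (k - 1) * ('X * 'X) ^+ (k - 1)) => n g Fg;
  have [sg cg] := Hfam n g Fg; have [p0 hp] := Hp n g Fg;
  rewrite !hornerM !horner_exp hornerM hornerX Bd_eval.
- rewrite (probS g k) in hp; rewrite (probB g k).
  exact: (transfer (Trees_sub g k) (@Bd_gt0 _ g k cg) p0 hp (key1 cg k0) (Pairs_sub g k)).
- rewrite (probB g k) in hp; rewrite (probS g k).
  exact: (transfer (Pairs_sub g k) (@Bd_gt0 _ g k cg) p0 hp (key2 cg k0) (Trees_sub g k)).
Qed.
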